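(* Every Brauer field is semi-perfect.
   Context: A field $k$ is a Brauer field if for every $d\ge 1$ there is a number $N_k(d)$ such that every equation $a_1x_1^d+\cdots+a_nx_n^d=0$ with $n>N_k(d)$ and $a_i\in k$ has a non-trivial solution in $k^n$. A field $k$ is semi-perfect if it has characteristic $0$, or it has characteristic $p>0$ and the degree $[k:k^{p^n}]$ is finite for all $n\ge 1$. *)

(* Defs.v *)
From mathcomp Require Import all_boot all_algebra.
Set Implicit Arguments. Unset Strict Implicit. Unset Printing Implicit Defensive.
Import GRing.Theory.
Local Open Scope ring_scope.

Definition brauer_field (k : fieldType) : Prop :=
  forall d : nat, (1 <= d)%N ->
    exists N : nat, forall n : nat, (N < n)%N ->
      forall a : 'I_n -> k,
        exists x : 'I_n -> k, (exists i, x i != 0) /\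
          \sum_(i < n) a i * x i ^+ d = 0.

(* [k : k^q] is finite, where k^q = { y^q | y in k } (q = p^n): k is spanned,
   as a vector space over the subfield k^q, by finitely many elements. *)
Definition finite_degree_over_pow (k : fieldType) (q : nat) : Prop :=
  exists s : seq k, forall x : k,
    exists c : 'I_(size s) -> k, x = \sum_(i < size s) (c i) ^+ q * s`_i.

Definition semi_perfect (k : fieldType) : Prop :=
  [pchar k] =i pred0 \/
  exists p : nat, p \in [pchar k] /\
    forall n : nat, (1 <= n)%N -> finite_degree_over_pow k (p ^ n).

(* Main.v *)
Require Import Defs.
From mathcomp Require Import all_boot all_algebra.
From Stdlib Require Import Classical.
Set Implicit Arguments. Unset Strict Implicit. Unset Printing Implicit Defensive.
Import GRing.Theory.
Local Open Scope ring_scope.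

Section S.
Variable k : fieldType.

Definition indep (q : nat) (s : seq k) :=
  forall c : 'I_(size s) -> k, \sum_(i < size s) c i ^+ q * s`_i = 0 ->
    forall i, c i = 0.

Lemma neg1_pow p n : p \in [pchar k] -> (-1 : k) ^+ (p ^ n) = -1.
Proof.
move=> hp; elim: n => [|n IH]; first by rewrite expn0 expr1.
rewrite expnSr exprM IH.
have := pFrobenius_autN hp 1; rewrite !pFrobenius_autE expr1n => ->.
by [].
Qed.

Lemma step q s : (-1 : k) ^+ q = -1 -> (0 < q)%N -> indep q s ->
  (forall x : k, exists c : 'I_(size s) -> k, x = \sum_(i < size s) (c i) ^+ q * s`_i)
  \/ exists x, indep q (x :: s).
Proof.
move=> hn hq hs.
case: (classic (forall x : k, exists c : 'I_(size s) -> k,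
   x = \sum_(i < size s) (c i) ^+ q * s`_i)) => H; first by left.
right; have [x Hx] := not_all_ex_not _ _ H.
exists x => c /= hc.
rewrite big_ord_recl /= in hc.
have c0 : c ord0 = 0.
  apply/eqP; apply: contraT => nz; exfalso; apply: Hx.
  exists (fun i => (-1) * c (lift ord0 i) / c ord0).
  have nzq : c ord0 ^+ q != 0 by rewrite expf_neq0.
  have : x = - (\sum_(i < size s) c (lift ord0 i) ^+ q * s`_i) / c ord0 ^+ q.
    apply: (mulIf nzq); rewrite mulfVK //.
    by apply/eqP; rewrite mulrC -addr_eq0 hc.
  move=> ->; rewrite -sumrN mulr_suml; apply: eq_bigr => i _.
  by rewrite !exprMn hn exprVn !mulN1r !mulNr mulrAC.
move=> i; case: (unliftP ord0 i) => [j ->|->] //.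
have := hs (fun j => c (lift ord0 j)).
rewrite c0 expr0n (negbTE (lt0n_neq0 hq)) mul0r add0r in hc => h.
exact: h hc j.
Qed.

End S.

Theorem proposition2p9 (k : fieldType) : brauer_field k -> semi_perfect k.
Proof.
move=> hB.
case: (classic (exists p, p \in [pchar k])) => [[p hp]|H]; last first.
  by left => p; apply/negP => hp; apply: H; exists p.
right; exists p; split => // n hn1.
have hpr := pcharf_prime hp.
set q := (p ^ n)%N.
have hq : (0 < q)%N by rewrite expn_gt0 prime_gt0.
have hn := @neg1_pow k p n hp.
have [N HN] := hB q hq.
suff: forall j, finite_degree_over_pow k q \/ exists s : seq k, size s = j /\ indep q s.
  case/(_ N.+1) => // [[s [hs hi]]].
  have [x [[i xi] hx]] := HN (size s) ltac:(by rewrite hs) (fun i => s`_i).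
  exfalso; move/negP: xi; apply.
  apply/eqP; apply: (hi x) i; rewrite -[RHS]hx; apply: eq_bigr => j _.
  by rewrite mulrC.
elim => [|j [IH|[s [hs hi]]]]; [right | by left|].
  by exists [::]; split => // c _ [].
case: (step hn hq hi) => [h|[x hx]]; first by left; exists s.
by right; exists (x :: s); rewrite /= hs.
Qed.
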